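(* Let $P$ be a poset on $[n]$ with natural labeling. Let $G$ be the digraph with vertex set $\mathcal{L}(P)$ having an edge $\pi\to\pi'$ if and only if $\pi'=\pi\partial_j$ for some $j\in[n]$ (respectively, $\pi'=\pi\tau_j$ for some $j\in[n-1]$). Then $G$ is strongly connected.
   Context: $\mathcal{L}(P)=\{\pi\in S_n : i\prec j \Rightarrow \pi^{-1}_i<\pi^{-1}_j\}$ in one-line notation $\pi=\pi_1\cdots\pi_n$. $\pi\tau_i$ ($1\le i<n$) swaps $\pi_i,\pi_{i+1}$ if they are incomparable in $P$ and is $\pi$ otherwise; operators act on the right, $\pi(\sigma\tau)=(\pi\sigma)\tau$; $\partial_j=\tau_j\tau_{j+1}\cdots\tau_{n-1}$ for $1\le j\le n$. *)

(* Defs.v *)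
(* Elements of [n] and positions 1..n are encoded 0-indexed as 'I_n. *)
From mathcomp Require Import all_boot all_fingroup.
Set Implicit Arguments. Unset Strict Implicit. Unset Printing Implicit Defensive.

Section Defs.
Variable n : nat.
Variable le : rel 'I_n.

Definition prec (i j : 'I_n) : bool := le i j && (i != j).

Definition comparableP (i j : 'I_n) : bool := le i j || le j i.

Definition is_poset : Prop :=
  [/\ reflexive le, antisymmetric le & transitive le].

Definition natural_labeling : Prop := forall i j, prec i j -> (i < j)%N.

(* One-line notation: pi_k = pi k (entry at position k); pi^{-1} i = position of i. *)
Definition linext (pi : {perm 'I_n}) : bool :=
  [forall i, forall j, prec i j ==> (pi^-1 i < pi^-1 j)%N]%g.

(* tau i (0-indexed position i, i.e. the paper's tau_{i+1}): swaps entries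
   at positions i and i+1 if incomparable; identity otherwise (and when out of range).
   (tperm a b * pi) k = pi (tperm a b k). *)
Definition tau (pi : {perm 'I_n}) (i : nat) : {perm 'I_n} :=
  match (insub i : option 'I_n), (insub i.+1 : option 'I_n) with
  | Some a, Some b => if ~~ comparableP (pi a) (pi b) then (tperm a b * pi)%g else pi
  | _, _ => pi
  end.

(* partial j (0-indexed, the paper's ∂_{j+1}) = tau_j tau_{j+1} ... tau_{n-2},
   operators acting on the right (first tau_j is applied). *)
Definition partial (j : nat) (pi : {perm 'I_n}) : {perm 'I_n} :=
  foldl tau pi (iota j (n.-1 - j)).

Definition edge_partial : rel {perm 'I_n} :=
  fun pi pi' => [&& linext pi, linext pi' & [exists j : 'I_n, pi' == partial j pi]].

Definition edge_tau : rel {perm 'I_n} :=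
  fun pi pi' => [&& linext pi, linext pi' & [exists j : 'I_n.-1, pi' == tau pi j]].

Definition strongly_connected (e : rel {perm 'I_n}) : Prop :=
  forall pi pi', linext pi -> linext pi' -> connect e pi pi'.
End Defs.

(* Main.v *)
Require Import Defs.
From mathcomp Require Import all_boot all_fingroup.
From mathcomp Require Import zify.
Set Implicit Arguments. Unset Strict Implicit.

Section Proofs.
Variable n : nat.
Variable le : rel 'I_n.
Hypothesis Hpo : is_poset le.
Hypothesis Hnat : natural_labeling le.
Local Open Scope group_scope.

Lemma tau_inv (pi : {perm 'I_n}) i : tau le (tau le pi i) i = pi.
Proof.
rewrite /tau; case: insubP => [a _ Ea|_] //; case: insubP => [b _ Eb|_] //.
case Hc: (comparableP le (pi a) (pi b)) => /=; first by rewrite Hc.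
rewrite !permM tpermL tpermR /comparableP orbC.
move: Hc; rewrite /comparableP => -> /=.
by rewrite mulgA tperm2 mul1g.
Qed.

Lemma sw_lt (p q a b sp sq : nat) : b = a.+1 -> (p < q)%N -> ~ (p = a /\ q = b) ->
  (p = a -> sp = b) -> (p = b -> sp = a) -> (p <> a -> p <> b -> sp = p) ->
  (q = a -> sq = b) -> (q = b -> sq = a) -> (q <> a -> q <> b -> sq = q) ->
  (sp < sq)%N.
Proof. lia. Qed.

Lemma val_tperm (a b x : 'I_n) :
  [/\ x = a -> val (tperm a b x) = val b, x = b -> val (tperm a b x) = val a &
      x <> a -> x <> b -> val (tperm a b x) = val x].
Proof.
split.
- by move=> ->; rewrite tpermL.
- by move=> ->; rewrite tpermR.
- by move=> /eqP Ha /eqP Hb; rewrite tpermD // eq_sym.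
Qed.

Lemma tau_linext (pi : {perm 'I_n}) i : linext le pi -> linext le (tau le pi i).
Proof.
move=> Hl; rewrite /tau; case: insubP => [a _ Ea|_] //; case: insubP => [b _ Eb|_] //.
case: ifP => // Hc.
apply/forallP => x; apply/forallP => y; apply/implyP => Hxy.
rewrite invMg tpermV !permM.
have := forallP (forallP Hl x) y => /implyP /(_ Hxy) H.
have [A1 A2 A3] := val_tperm a b (pi^-1 x).
have [B1 B2 B3] := val_tperm a b (pi^-1 y).
have ov : forall u v : 'I_n, val u = val v -> u = v by move=> u v; apply: val_inj.
apply: (@sw_lt (val (pi^-1 x)) (val (pi^-1 y)) (val a) (val b)).
- by rewrite Ea Eb.
- exact: H.
- move=> [/ov Ex /ov Ey].
  move/negP: Hc; apply; rewrite /comparableP.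
  have -> : pi a = x by rewrite -Ex permKV.
  have -> : pi b = y by rewrite -Ey permKV.
  by case/andP: Hxy => ->.
- by move=> /ov; auto.
- by move=> /ov; auto.
- by move=> Hp1 Hp2; apply: A3 => E; subst; auto.
- by move=> /ov; auto.
- by move=> /ov; auto.
- by move=> Hp1 Hp2; apply: B3 => E; subst; auto.
Qed.

Definition W (s : {perm 'I_n}) : nat := (\sum_(k < n) k * s k)%N.

Lemma W_bound s : (W s <= n * (n * n))%N.
Proof.
rewrite /W -[X in (_ <= X * _)%N]card_ord -sum_nat_const.
apply: leq_sum => k _; apply: leq_mul; apply: ltnW; exact: ltn_ord.
Qed.

Lemma W_split (a b : 'I_n) (s : {perm 'I_n}) : a != b ->
  W s = (a * s a + (b * s b + \sum_(k < n | (k != a) && (k != b)) k * s k))%N.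
Proof.
move=> Hab; rewrite /W (bigD1 a) //= (bigD1 b) /=; last by rewrite eq_sym.
congr (_ + (_ + _))%N; apply: eq_bigl => k; by rewrite andbC.
Qed.

Lemma W_incr (a b : 'I_n) (s : {perm 'I_n}) : val b = (val a).+1 -> (s b < s a)%N ->
  (W s < W (tperm a b * s))%N.
Proof.
move=> Eb Hlt.
have Hab : a != b by apply/eqP => E; move: Eb; rewrite E; lia.
rewrite !(W_split _ Hab) !permM tpermL tpermR.
have -> : (\sum_(k < n | (k != a) && (k != b)) k * (tperm a b * s)%g k =
           \sum_(k < n | (k != a) && (k != b)) k * s k)%N.
  by apply: eq_bigr => k /andP [Ha Hb]; rewrite permM tpermD // eq_sym.
rewrite Eb; change (\val a) with (nat_of_ord a); nia.
Qed.

Lemma descent (pi : {perm 'I_n}) : pi != 1 ->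
  exists a b : 'I_n, val b = (val a).+1 /\ (pi b < pi a)%N.
Proof.
move=> H1.
have [k0 Hk0] : exists k, pi k != k.
  apply/existsP; apply: contraR H1 => /existsPn Hn; apply/eqP/permP => k.
  by rewrite perm1; apply/eqP; move: (Hn k); rewrite negbK.
case: (@arg_minnP _ k0 (fun k => pi k != k) (fun k : 'I_n => val k) Hk0) => k Hk Hmin.
have Hlow : forall j : 'I_n, (j < k)%N -> pi j = j.
  move=> j Hj; apply/eqP; apply: contraTT Hj => Hj; rewrite -leqNgt; exact: Hmin.
set m := pi^-1 k.
have Hpm : pi m = k by rewrite /m permKV.
have Hmk : (k < m)%N.
  case: (ltngtP k m) => // Hc.
  - by move: (Hlow _ Hc); rewrite Hpm => E; move: Hc; rewrite E ltnn.
  - have E : k = m by apply: val_inj; exact: Hc.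
    by move/negP: Hk; case; rewrite {1}E Hpm.
have Hc : (m.-1 < n)%N by have := ltn_ord m; lia.
exists (Ordinal Hc), m; split; first by rewrite /=; lia.
rewrite Hpm.
case: (ltngtP (pi (Ordinal Hc)) k) => // Hc2.
- have E := Hlow _ Hc2.
  have E2 := perm_inj E.
  by move: Hc2; rewrite E2 /=; lia.
- have : pi (Ordinal Hc) = pi m by rewrite Hpm; apply: val_inj.
  by move/perm_inj => /(congr1 val) /=; lia.
Qed.

Lemma linext1 : linext le 1.
Proof.
apply/forallP => x; apply/forallP => y; apply/implyP => H.
rewrite invg1 !perm1; exact: Hnat.
Qed.

Lemma tau_swap (pi : {perm 'I_n}) (a b : 'I_n) : val b = (val a).+1 ->
  ~~ comparableP le (pi a) (pi b) -> tau le pi (val a) = tperm a b * pi.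
Proof.
move=> Eb Hc; rewrite /tau valK.
have -> : insub (val a).+1 = Some b by rewrite -Eb valK.
by rewrite Hc.
Qed.

Lemma to_one (pi : {perm 'I_n}) : linext le pi -> connect (edge_tau le) pi 1.
Proof.
have [Hrefl Hanti Htrans] := Hpo.
suff: forall m pi, (n * (n * n) - W pi < m)%N -> linext le pi -> connect (edge_tau le) pi 1.
  by move=> H; apply: H; exact: ltnSn.
elim=> [|m IH] {}pi //.
move=> Hm Hl.
case: (eqVneq pi 1) => [->|H1]; first exact: connect0.
have [a [b [Eb Hlt]]] := descent H1.
have Eb2 : nat_of_ord b = (nat_of_ord a).+1 := Eb.
have Hab : a != b by apply/eqP => E; move: Eb; rewrite E; lia.
have Hc : ~~ comparableP le (pi a) (pi b).
  rewrite /comparableP negb_or; apply/andP; split; apply/negP => Hle.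
  - have Hp : prec le (pi a) (pi b) by rewrite /prec Hle (inj_eq perm_inj).
    by have := Hnat Hp; lia.
  - have Hp : prec le (pi b) (pi a) by rewrite /prec Hle (inj_eq perm_inj) eq_sym.
    have := implyP (forallP (forallP Hl (pi b)) (pi a)) Hp.
    by rewrite !permK; lia.
have Hl' := tau_linext (val a) Hl.
have Ht := tau_swap Eb Hc.
have Ha : (nat_of_ord a < n.-1)%N by have := ltn_ord b; lia.
apply: connect_trans (connect1 _) (IH _ _ Hl').
  rewrite /edge_tau Hl Hl' /=; apply/existsP; exists (Ordinal Ha); by [].
rewrite Ht.
have := W_incr Eb Hlt; have := W_bound (tperm a b * pi); lia.
Qed.

Lemma edge_tau_sym : symmetric (edge_tau le).
Proof.
suff H : forall x y, edge_tau le x y -> edge_tau le y x.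
  by move=> x y; apply/idP/idP; apply: H.
move=> x y /and3P [Hx Hy /existsP [j /eqP Ey]].
rewrite /edge_tau Hx Hy /=; apply/existsP; exists j; by rewrite Ey tau_inv.
Qed.

Lemma tau_conn : strongly_connected le (edge_tau le).
Proof.
move=> pi pi' Hp Hp'.
apply: connect_trans (to_one Hp) _.
by rewrite (sym_connect_sym edge_tau_sym); apply: to_one.
Qed.

Lemma partial_linext j (pi : {perm 'I_n}) : linext le pi -> linext le (partial le j pi).
Proof.
rewrite /partial; elim: (iota _ _) pi => //= x s IH pi Hl; apply: IH; exact: tau_linext.
Qed.

Lemma partial_inj j : injective (partial le j).
Proof.
rewrite /partial; elim: (iota _ _) => //= x s IH p q /IH E.
by rewrite -[p](tau_inv p x) E tau_inv.
Qed.

Lemma partial_step (j : nat) (pi : {perm 'I_n}) : (j.+1 < n)%N ->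
  partial le j pi = partial le j.+1 (tau le pi j).
Proof.
move=> Hj; rewrite /partial.
have -> : (n.-1 - j = (n.-1 - j.+1).+1)%N by lia.
by [].
Qed.

Lemma fconn (j : 'I_n) x y : linext le x -> fconnect (partial le j) x y ->
  connect (edge_partial le) x y.
Proof.
move=> Hx /connectP [p Hp ->]; elim: p x Hx Hp => [|z p IH] x Hx /=.
  by move=> _; exact: connect0.
case/andP => /eqP Ez Hp; subst z.
have Hz := partial_linext j Hx.
apply: connect_trans (connect1 _) (IH _ Hz Hp).
rewrite /edge_partial Hx Hz /=; apply/existsP; by exists j.
Qed.

Lemma tau_to_partial : subrel (edge_tau le) (connect (edge_partial le)).
Proof.
move=> x y /and3P [Hx Hy /existsP [j /eqP Ey]].
have Hj1 : (j.+1 < n)%N by have := ltn_ord j; lia.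
have Hj0 : (j < n)%N by lia.
pose j0 : 'I_n := Ordinal Hj0.
pose j1 : 'I_n := Ordinal Hj1.
have Hz := partial_linext j0 Hx.
apply: connect_trans (connect1 (_ : edge_partial le x (partial le j0 x))) _.
  rewrite /edge_partial Hx Hz /=; apply/existsP; by exists j0.
apply: (@fconn j1 _ _ Hz).
have -> : partial le j0 x = partial le j1 y by rewrite Ey /= (partial_step _ Hj1).
by rewrite fconnect_sym ?fconnect1 //; exact: partial_inj.
Qed.
End Proofs.

Theorem proposition4p1 (n : nat) (le : rel 'I_n) :
  is_poset le -> natural_labeling le ->
  strongly_connected le (edge_partial le) /\ strongly_connected le (edge_tau le).
Proof.
move=> Hpo Hnat; split; last exact: tau_conn.
move=> pi pi' Hp Hp'.
exact: (connect_sub (@tau_to_partial n le) (tau_conn Hpo Hnat Hp Hp')).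
Qed.
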